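(* Let $n\geq 3$ be an integer and put $m=2^{n-1}$. Let $G_2(n)=\{0,1,\dots,2^n-1\}$ be the gyrogroup with operation $\oplus$ and gyroautomorphisms $\mathrm{gyr}$ defined in the context below. Then $G_2(n)$ is gyrocommutative, i.e. $a\oplus b=\mathrm{gyr}[a,b](b\oplus a)$ for all $a,b\in G_2(n)$.
   Context: Setup: $n\ge 3$, $m=2^{n-1}$, $G_2(n)=\{0,1,\dots,2^n-1\}$, $P(n)=\{0,\dots,m-1\}$, $H(n)=\{m,\dots,2^n-1\}$; $O_P,E_P$ are the odd/even elements of $P(n)$, $O_H,E_H$ the odd/even elements of $H(n)$. For $i,j\in G_2(n)$ let $t,s\in P(n)$ with $t\equiv i+j\pmod m$, $s\equiv i+j+\frac m2\pmod m$, and set $i\oplus j=t$ if $(i,j)\in (P(n)\times P(n))\cup\big[(H(n)\times H(n))\setminus(E_H\times O_H)\big]$; $i\oplus j=t+m$ if $(i,j)\in (P(n)\times H(n))\cup\big[(H(n)\times P(n))\setminus(E_H\times O_P)\big]$; $i\oplus j=s$ if $(i,j)\in E_H\times O_H$; $i\oplus j=s+m$ if $(i,j)\in E_H\times O_P$. Let $A\colon G_2(n)\to G_2(n)$ be $A(i)=r$ if $i\in O_P$, $A(i)=r+m$ if $i\in O_H$, $A(i)=i$ otherwise, where $r\in P(n)$, $r\equiv i+\frac m2\pmod m$. Let $M=[O_P\times(O_H\cup E_H)]\cup[O_H\times(O_P\cup E_H)]\cup[E_H\times(O_P\cup O_H)]$, and define $\mathrm{gyr}[a,b]=A$ if $(a,b)\in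 M$ and $\mathrm{gyr}[a,b]=I$ (identity map) otherwise. With these, $(G_2(n),\oplus)$ is a gyrogroup (identity $0$, $a\oplus(b\oplus c)=(a\oplus b)\oplus\mathrm{gyr}[a,b](c)$, $\mathrm{gyr}[a,b]=\mathrm{gyr}[a\oplus b,b]$, each $\mathrm{gyr}[a,b]$ an automorphism). *)

(* Defs.v *)
From mathcomp Require Import all_boot.
Set Implicit Arguments. Unset Strict Implicit. Unset Printing Implicit Defensive.

Section G2.
Variable n : nat.

Definition mG := 2 ^ n.-1.
Definition inG (i : nat) := i < 2 ^ n.
Definition inP (i : nat) := i < mG.
Definition inH (i : nat) := (mG <= i) && (i < 2 ^ n).
Definition inOP i := inP i && odd i.
Definition inEP i := inP i && ~~ odd i.
Definition inOH i := inH i && odd i.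
Definition inEH i := inH i && ~~ odd i.

Definition gop (i j : nat) : nat :=
  let t := (i + j) %% mG in
  let s := (i + j + mG %/ 2) %% mG in
  if inEH i && inOH j then s
  else if inEH i && inOP j then s + mG
  else if (inP i && inP j) || (inH i && inH j) then t
  else t + mG.

Definition Amap (i : nat) : nat :=
  let r := (i + mG %/ 2) %% mG in
  if inOP i then r else if inOH i then r + mG else i.

Definition inM (a b : nat) : bool :=
  [|| inOP a && (inOH b || inEH b),
      inOH a && (inOP b || inEH b) |
      inEH a && (inOP b || inOH b)].

Definition gyr (a b : nat) : nat -> nat :=
  if inM a b then Amap else id.

End G2.

(* Main.v *)
Require Import Defs.
From mathcomp Require Import all_boot.
Theorem mainTheorem3 (n : nat) (hn : 3 <= n) (a b : nat) :
  inG n a -> inG n b ->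
  gop n a b = gyr n a b (gop n b a).
Proof.
idtac.
have E2 : 2 ^ n = mG n + mG n.
  by rewrite /mG; case: n hn => // n' _; rewrite expnS /= mul2n -addnn.
have m0 : 0 < mG n by rewrite /mG expn_gt0.
have [h Hh oh] : exists2 h, mG n %/ 2 = h & h + h = mG n /\ odd h = false.
  exists (mG n %/ 2) => //; rewrite /mG; case: n hn E2 m0 => // [[|[|n']]] //= _ _ _.
  by rewrite !expnS mulKn // mulnA addnn -mul2n mulnA; split => //; rewrite oddM.
rewrite /gop /gyr /Amap /inM /inOP /inOH /inEP /inEH /inH /inP /inG E2 Hh.
case: oh => Hm oh.
move: (mG n) Hm m0 => m Hm m0.
have om : odd m = false by rewrite -Hm oddD oh.
have L1 z : (z %% m < m) = true by rewrite ltn_pmod.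
have L2 z : (m <= z %% m) = false by rewrite leqNgt L1.
have L3 z : (m <= z %% m + m) = true by rewrite leq_addl.
have L4 z : (z %% m + m < m + m) = true by rewrite ltn_add2r L1.
have L5 z : (z %% m + m < m) = false by rewrite ltnNge leq_addl.
have L6 z : odd (z %% m) = odd z by rewrite odd_mod.
have L7 z : odd (z %% m + m) = odd z by rewrite oddD om addbF odd_mod.
have L8 z : (z %% m + m + h) %% m = (z + h) %% m by rewrite addnAC modnDr modnDml.
have L9 z : (z + h + h) %% m = z %% m by rewrite -addnA Hm modnDr.
have La : a + b = b + a by rewrite addnC.
move=> Ha Hb.
have [a1|a1] := ltnP a m; have [b1|b1] := ltnP b m;
  rewrite ?Ha ?Hb ?a1 ?b1 ?(leqNgt m a) ?(leqNgt m b) ?a1 ?b1 /=;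
  case oa: (odd a); case ob: (odd b) => /=;
  rewrite ?L1 ?L2 ?L3 ?L4 ?L5 ?L6 ?L7 ?oddD ?oa ?ob ?oh /=;
  rewrite ?L8 ?modnDml ?L9 ?La //.
Qed.
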